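(* Let $p=4f+1$ be a prime, and write $p=x^2+4y^2$ with integers $x,y$ and $x\equiv1\pmod 4$. Then $g_4(p)=4$ if $p=5$; $g_4(p)=3$ if $p\in\{13,17,29\}$; and $g_4(p)=2$ otherwise.
   Context: For $a\in\mathbb{F}_p^*$, $s_d(p,a)=\min\{k\mid a=\sum_{i=1}^k a_i^d,\ a_i\in\mathbb{F}_p^*\}$, and $g_d(p)=\max_{a\in\mathbb{F}_p^*}s_d(p,a)$ (the smallest $k$ such that every element of $\mathbb{F}_p^*$ is a sum of $k$ nonzero $d$-th powers). *)

(* Defs.v *)
From mathcomp Require Import all_boot all_order all_algebra.
Set Implicit Arguments. Unset Strict Implicit. Unset Printing Implicit Defensive.
Import GRing.Theory.
Local Open Scope ring_scope.

Definition sum_nz_powers (d p k : nat) (a : 'F_p) : bool :=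
  [exists f : {ffun 'I_k -> 'F_p}, [forall i, f i != 0] && (a == \sum_(i < k) f i ^+ d)].

Definition s_is (d p : nat) (a : 'F_p) (k : nat) : Prop :=
  sum_nz_powers d k a /\ (forall j, (j < k)%N -> ~~ sum_nz_powers d j a).

(* g_d(p) = n : n = max_{a in F_p^*} s_d(p,a) (all s_d(p,a) defined) *)
Definition g_is (d p n : nat) : Prop :=
  (forall a : 'F_p, a != 0 -> exists2 k, s_is d a k & (k <= n)%N) /\
  (exists2 a : 'F_p, a != 0 & s_is d a n).

(* Main.v *)
Require Import Defs.
From mathcomp Require Import all_boot all_order all_algebra.
From mathcomp Require Import zify ring lra.
Set Implicit Arguments. Unset Strict Implicit. Unset Printing Implicit Defensive.
Import GRing.Theory Num.Theory Order.TTheory.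
Local Open Scope ring_scope.

Section Gen.
Variable F : finFieldType.
Hypothesis two_nz : (2 : F) != 0.
Local Notation q := #|F|.

Definition sq (a : F) := [exists t, t ^+ 2 == a].
Definition r (a : F) : nat := #|[pred t : F | t ^+ 2 == a]|.
Definition chi (a : F) : int := (r a)%:Z - 1.

Lemma sum_sq (G : F -> int) : \sum_t G (t ^+ 2) = \sum_a (r a)%:Z * G a.
Proof.
rewrite (partition_big (fun t => t ^+ 2) xpredT) //=.
apply: eq_bigr => a _.
rewrite (eq_bigr (fun _ => G a)); last by move=> t /eqP ->.
rewrite (@eq_bigl _ _ _ _ _ _ (mem [pred t | t ^+ 2 == a])); last by move=> t; rewrite !inE.
by rewrite sumr_const -mulr_natl natz.
Qed.

Lemma r0 : r 0 = 1%N.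
Proof.
rewrite /r -(card1 (0 : F)); apply: eq_card => t; rewrite !inE.
by rewrite expf_eq0.
Qed.

Lemma r_sq t : t != 0 -> r (t ^+ 2) = 2%N.
Proof.
move=> tn0; rewrite /r (@eq_card _ _ (pred2 t (- t))); last first.
  by move=> s; rewrite !inE eqf_sqr.
rewrite card2 (_ : t != - t) //.
by rewrite -addr_eq0 -mulr2n -mulr_natl mulf_eq0 negb_or tn0 andbT.
Qed.

Lemma r_nsq a : ~~ sq a -> r a = 0%N.
Proof.
move=> /existsPn H; apply: eq_card0 => t; rewrite !inE; exact/negbTE/H.
Qed.

Lemma sq0 : sq 0. Proof. by apply/existsP; exists 0; rewrite expr0n. Qed.

Lemma chi0 : chi 0 = 0. Proof. by rewrite /chi r0. Qed.
Lemma chi_sq t : t != 0 -> chi (t ^+ 2) = 1. Proof. by move=> h; rewrite /chi r_sq. Qed.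
Lemma chi_nsq a : ~~ sq a -> chi a = -1. Proof. by move=> h; rewrite /chi r_nsq. Qed.
Lemma chi_sq' a : a != 0 -> sq a -> chi a = 1.
Proof.
move=> an0 /existsP [t /eqP ht]; rewrite -ht; apply: chi_sq.
by apply: contraNneq an0 => h; rewrite -ht h expr0n.
Qed.

Lemma chiE a : chi a = if a == 0 then 0 else if sq a then 1 else -1.
Proof.
case: eqP => [->|/eqP an0]; first exact: chi0.
by case: ifP => h; [apply: chi_sq' | apply: chi_nsq; rewrite h].
Qed.

Lemma sum_const1 : \sum_(t : F) (1 : int) = q%:Z.
Proof. by rewrite sumr_const -natz. Qed.

Lemma sum_r : \sum_a (r a)%:Z = q%:Z.
Proof.
have := sum_sq (fun _ => 1); rewrite sum_const1 => ->.
by apply: eq_bigr => a _; rewrite mulr1.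
Qed.

Lemma sum_chi : \sum_a chi a = 0.
Proof.
rewrite /chi sumrB sum_r sum_const1; exact: subrr.
Qed.

Definition Qs := [set x : F | (x != 0) && sq x].
Definition Ns := [set x : F | ~~ sq x].

Lemma card_QN : #|Qs| = #|Ns|.
Proof.
have H : forall x, chi x = (if x \in Qs then 1 else 0) - (if x \in Ns then 1 else 0).
  move=> x; rewrite chiE !inE; case: eqP => [->|_] /=; first by rewrite sq0.
  by case: (sq x).
have := sum_chi; rewrite (eq_bigr _ (fun x _ => H x)) sumrB -!big_mkcond /=.
rewrite !sumr_const => /eqP; rewrite subr_eq0 => /eqP.
by move/eqP; rewrite eqr_nat => /eqP.
Qed.

Lemma sq_mul a b : sq a -> sq b -> sq (a * b).
Proof.
move=> /existsP [s /eqP <-] /existsP [t /eqP <-]; apply/existsP; exists (s * t).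
by rewrite exprMn.
Qed.

Lemma nsq_mul a b : sq a -> a != 0 -> ~~ sq b -> ~~ sq (a * b).
Proof.
move=> /existsP [s /eqP <-] an0 nb; apply: contra nb => /existsP [t /eqP ht].
have sn0 : s != 0 by apply: contraNneq an0 => ->; rewrite expr0n.
apply/existsP; exists (t / s); rewrite expr_div_n ht (mulrC (s ^+ 2)) mulfK // expf_eq0 sn0.
Qed.

Lemma sq_mulN a b : ~~ sq a -> ~~ sq b -> sq (a * b).
Proof.
move=> na nb.
have an0 : a != 0 by apply: contraNneq na => ->; exact: sq0.
have sub : [set a * x | x in Qs] \subset Ns.
  apply/subsetP => y /imsetP [x]; rewrite !inE => /andP [xn0 sx] ->.
  by rewrite mulrC nsq_mul.
have ceq : #|[set a * x | x in Qs]| = #|Ns|.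
  by rewrite card_imset ?card_QN //; exact: mulfI.
have Eq : [set a * x | x in Qs] = Ns.
  by apply/eqP; rewrite eqEcard sub ceq leqnn.
have : b \in Ns by rewrite inE.
rewrite -Eq => /imsetP [x]; rewrite inE => /andP [_ /existsP [t /eqP <-]] ->.
by apply/existsP; exists (a * t); rewrite mulrA -expr2 exprMn.
Qed.

Lemma chiM a b : chi (a * b) = chi a * chi b.
Proof.
rewrite !chiE mulf_eq0.
case: (a =P 0) => [_|/eqP an0] /=; first by rewrite mul0r.
case: (b =P 0) => [_|/eqP bn0] /=; first by rewrite mulr0.
case sa: (sq a); case sb: (sq b).
- by rewrite sq_mul.
- by rewrite (negbTE (nsq_mul sa an0 (negbT sb))).
- by rewrite mulrC (negbTE (nsq_mul sb bn0 (negbT sa))).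
- by rewrite sq_mulN ?sa ?sb.
Qed.

Lemma chi1 : chi 1 = 1. Proof. by rewrite -(expr1n _ 2) chi_sq ?oner_eq0. Qed.

Lemma chi_sqr a : a != 0 -> chi a * chi a = 1.
Proof. by move=> an0; rewrite chiE (negbTE an0); case: (sq a). Qed.

Lemma chi_sq_any t a : t != 0 -> chi (t ^+ 2 * a) = chi a.
Proof. by move=> tn0; rewrite chiM chi_sq // mul1r. Qed.

Lemma chi_le1 a b : chi a * chi b <= 1.
Proof. by rewrite !chiE; do 2 (case: ifP => _ //; try case: ifP => _ //). Qed.

Lemma chi_ge1 a b : -1 <= chi a * chi b.
Proof. by rewrite !chiE; do 2 (case: ifP => _ //; try case: ifP => _ //). Qed.

Lemma chi_abs a : -1 <= chi a <= 1.
Proof. by rewrite !chiE; case: ifP => _ //; case: ifP. Qed.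

Lemma r_le2 a : (r a <= 2)%N.
Proof.
case sa: (sq a); last by rewrite r_nsq ?sa.
move: sa => /existsP [t /eqP <-]; case: (t =P 0) => [->|/eqP tn0].
  by rewrite expr0n /= r0.
by rewrite r_sq.
Qed.

Lemma sum_nz (x : int) : \sum_(t : F | t != 0) x = x * (q%:Z - 1).
Proof.
have := sum_const1; rewrite (bigD1 0) //= => h.
have : \sum_(t : F) x = x * q%:Z by rewrite -sum_const1 mulr_sumr; apply: eq_bigr => *; rewrite mulr1.
rewrite (bigD1 0) //= => h2; rewrite mulrBr mulr1 -h2; ring.
Qed.

Lemma r_sum a : (r a)%:Z = \sum_t ((t ^+ 2 == a)%:R).
Proof.
rewrite (sum_sq (fun z => (z == a)%:R)) (bigD1 a) //= eqxx mulr1 big1 ?addr0 //.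
by move=> z /negbTE ->; rewrite mulr0.
Qed.

Lemma sum_chi_aff k b : k != 0 -> \sum_x chi (k * x + b) = 0.
Proof.
move=> kn0; transitivity (\sum_x chi x); last exact: sum_chi.
rewrite [RHS](reindex_inj (h := fun x => k * x + b)) //.
by move=> x y /= /addIr /(mulfI kn0).
Qed.

Lemma sum_chi_quad0 d : d != 0 -> \sum_x chi (x * (x + d)) = -1.
Proof.
move=> dn0.
have H : forall x, chi (x * (x + d)) = chi (d * x^-1 + 1) - (x == 0)%:R.
  move=> x; case: (x =P 0) => [->|/eqP xn0].
    by rewrite invr0 !mulr0 !mul0r !add0r chi0 chi1.
  rewrite subr0 -(chi_sq_any (d * x^-1 + 1) xn0); congr chi; field; exact: xn0.
rewrite (eq_bigr _ (fun x _ => H x)) sumrB.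
have -> : \sum_(x : F) chi (d * x^-1 + 1) = 0.
  rewrite (reindex_inj (h := fun x : F => x^-1)) /=; last exact: invr_inj.
  by under eq_bigr do rewrite invrK; apply: sum_chi_aff.
rewrite (bigD1 0) //= eqxx big1 ?addr0 ?sub0r //.
by move=> x /negbTE ->.
Qed.

Lemma sum_chi_sqr : \sum_(x : F) chi (x * x) = q%:Z - 1.
Proof.
rewrite (bigD1 0) //= mul0r chi0 add0r -[RHS]mul1r -sum_nz.
by apply: eq_bigr => x xn0; rewrite -expr2 chi_sq.
Qed.

Lemma sum_chi_quad A B :
  \sum_x chi ((x - A) * (x - B)) = if A == B then q%:Z - 1 else -1.
Proof.
rewrite (reindex_inj (h := fun x => x + B)) /=; last exact: addIr.
case: (A =P B) => [->|/eqP AB].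
  by under eq_bigr do rewrite addrK; exact: sum_chi_sqr.
rewrite -(sum_chi_quad0 (d := B - A)); last by rewrite subr_eq0 eq_sym.
apply: eq_bigr => x _; congr chi; ring.
Qed.

Lemma q_gt1 : (1 < q)%N. Proof. exact: card_finNzRing_gt1. Qed.

Definition psi (c : F) : int := \sum_V chi (V * (V ^+ 2 - c)).

Lemma psi_scale t c : t != 0 -> psi (c * t ^+ 2) = chi t * psi c.
Proof.
move=> tn0; rewrite /psi (reindex_inj (h := fun Z => t * Z)) /=; last exact: mulfI.
rewrite mulr_sumr; apply: eq_bigr => Z _.
have -> : t * Z * ((t * Z) ^+ 2 - c * t ^+ 2) = t ^+ 2 * (t * (Z * (Z ^+ 2 - c))) by ring.
by rewrite chi_sq_any // chiM.
Qed.

Lemma sum_psi2 : \sum_c psi c ^+ 2 <= 2 * q%:Z * (q%:Z - 1).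
Proof.
have E : forall c, psi c ^+ 2 =
    \sum_V \sum_W chi (V * W) * chi ((c - V ^+ 2) * (c - W ^+ 2)).
  move=> c; rewrite expr2 /psi mulr_suml; apply: eq_bigr => V _.
  rewrite mulr_sumr; apply: eq_bigr => W _; rewrite -!chiM; congr chi; ring.
rewrite (eq_bigr _ (fun c _ => E c)) exchange_big /=.
under eq_bigr do rewrite exchange_big /=.
have E2 : forall V W, \sum_c chi (V * W) * chi ((c - V ^+ 2) * (c - W ^+ 2))
    = chi (V * W) * (if V ^+ 2 == W ^+ 2 then q%:Z - 1 else -1).
  by move=> V W; rewrite -mulr_sumr sum_chi_quad.
under eq_bigr do under eq_bigr do rewrite E2.
apply: le_trans (_ : \sum_V \sum_W (q%:Z * ((V != 0)%:R * (W ^+ 2 == V ^+ 2)%:R)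
     - chi V * chi W) <= _).
  apply: ler_sum => V _; apply: ler_sum => W _.
  case: (V =P 0) => [->|/eqP Vn0]; first by rewrite !mul0r chi0 !mul0r mulr0 subr0.
  rewrite chiM eq_sym; case: eqP => _.
    have := chi_le1 V W; set x := chi V * chi W => hx.
    rewrite mulr1; have hq : 0 <= q%:Z by [].
    nia.
  by rewrite mulr0 mulrN1 sub0r.
under eq_bigr do rewrite sumrB.
rewrite sumrB.
have -> : \sum_(V : F) \sum_(W : F) chi V * chi W = 0.
  by rewrite big1 // => V _; rewrite -mulr_sumr sum_chi mulr0.
rewrite subr0.
have -> : \sum_(V : F) \sum_(W : F) q%:Z * ((V != 0)%:R * (W ^+ 2 == V ^+ 2)%:R)
   = \sum_(V : F | V != 0) q%:Z * 2.
  rewrite (bigD1 0) //= big1 ?add0r; last by move=> W _; rewrite eqxx !mul0r mulr0.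
  apply: eq_bigr => V Vn0; rewrite -mulr_sumr -mulr_sumr Vn0 mul1r -r_sum r_sq //.
rewrite sum_nz le_eqVlt; apply/orP; left; apply/eqP; ring.
Qed.

Lemma psi_bound c : c != 0 -> psi c ^+ 2 <= 4 * q%:Z.
Proof.
move=> cn0.
have E1 : \sum_t psi (c * t ^+ 2) ^+ 2 = psi 0 ^+ 2 + psi c ^+ 2 * (q%:Z - 1).
  rewrite (bigD1 0) //= expr0n /= mulr0 -sum_nz; congr (_ + _).
  by apply: eq_bigr => t tn0; rewrite psi_scale // exprMn expr2 chi_sqr // mul1r.
have E2 : \sum_t psi (c * t ^+ 2) ^+ 2 <= 4 * q%:Z * (q%:Z - 1).
  rewrite (sum_sq (fun Z => psi (c * Z) ^+ 2)).
  apply: le_trans (_ : \sum_Z 2 * psi (c * Z) ^+ 2 <= _).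
    apply: ler_sum => Z _; apply: ler_wpM2r; first exact: sqr_ge0.
    by rewrite lez_nat r_le2.
  rewrite -mulr_sumr.
  rewrite (reindex_inj (h := fun Z => c^-1 * Z)) /=; last by apply: mulfI; rewrite invr_eq0.
  under eq_bigr do rewrite mulVKf //.
  have := sum_psi2; set S := \sum_i _ => h.
  rewrite (_ : 4 * _ * _ = 2 * (2 * q%:Z * (q%:Z - 1))); last by ring.
  by rewrite ler_pM2l.
have := q_gt1; move: E1 E2; set X := psi c ^+ 2; set Y := psi 0 ^+ 2.
have hY : 0 <= Y by exact: sqr_ge0.
have hX : 0 <= X by exact: sqr_ge0.
move=> -> h1 h2; have h3 : 2 <= q%:Z by rewrite lez_nat.
nia.
Qed.

Lemma eq_addsub (X Y a : F) : (X + Y == a) = (Y == a - X).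
Proof. by apply/eqP/eqP => [<-|->]; ring. Qed.

Lemma sum_sq2 (G : F -> F -> int) :
  \sum_u \sum_v G (u ^+ 2) (v ^+ 2) = \sum_X \sum_Y (r X)%:Z * (r Y)%:Z * G X Y.
Proof.
under eq_bigr do rewrite (sum_sq (fun Y => G _ Y)).
rewrite (sum_sq (fun X => \sum_Y (r Y)%:Z * G X Y)).
apply: eq_bigr => X _; rewrite mulr_sumr; apply: eq_bigr => Y _; by rewrite mulrA.
Qed.

Lemma sum_pick (G : F -> int) (b : F) :
  \sum_Y (r Y)%:Z * G Y * ((Y == b)%:R) = (r b)%:Z * G b.
Proof.
rewrite (bigD1 b) //= eqxx mulr1 big1 ?addr0 // => Y /negbTE ->; by rewrite mulr0.
Qed.

Lemma inner_I (X a : F) : \sum_Y ((X ^+ 2 + Y ^+ 2 == a)%:R : int) = (r (a - X ^+ 2))%:Z.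
Proof. by rewrite r_sum; apply: eq_bigr => Y _; rewrite eq_addsub. Qed.

Lemma chi_N1 (b : F) : chi (- b) = chi (-1) * chi b.
Proof. by rewrite -chiM mulN1r. Qed.

Lemma A1_val a : a != 0 -> \sum_X (r (a - X ^+ 2))%:Z = q%:Z - chi (-1).
Proof.
move=> an0.
have -> : \sum_X (r (a - X ^+ 2))%:Z = \sum_X (1 + chi (a - X ^+ 2)).
  by apply: eq_bigr => X _; rewrite /chi; ring.
rewrite big_split /= sum_const1 (sum_sq (fun Z => chi (a - Z))).
have -> : \sum_Z (r Z)%:Z * chi (a - Z) = \sum_Z (chi ((-1) * Z + a) + chi (-1) * chi ((Z - 0) * (Z - a))).
  apply: eq_bigr => Z _.
  have e1 : chi (-1) * chi ((Z - 0) * (Z - a)) = chi Z * chi (a - Z).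
    by rewrite -!chiM; congr chi; ring.
  have e2 : -1 * Z + a = a - Z by ring.
  have e3 : (r Z)%:Z = 1 + chi Z by rewrite /chi; ring.
  by rewrite e1 e2 e3; ring.
rewrite big_split /= sum_chi_aff ?oppr_eq0 ?oner_eq0 // add0r -mulr_sumr sum_chi_quad.
rewrite eq_sym (negbTE an0); ring.
Qed.

Lemma B1_val a : \sum_X chi X * (r (a - X ^+ 2))%:Z = chi (-1) * psi a.
Proof.
have -> : \sum_X chi X * (r (a - X ^+ 2))%:Z
   = \sum_X (chi X + chi (-1) * chi (X * (X ^+ 2 - a))).
  apply: eq_bigr => X _.
  have e1 : chi (-1) * chi (X * (X ^+ 2 - a)) = chi X * chi (a - X ^+ 2).
    by rewrite -!chiM; congr chi; ring.
  have e3 : (r (a - X ^+ 2))%:Z = 1 + chi (a - X ^+ 2) by rewrite /chi; ring.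
  by rewrite e1 e3; ring.
by rewrite big_split /= sum_chi add0r -mulr_sumr.
Qed.

Lemma two_inv_nz : (2 : F)^-1 != 0.
Proof. by rewrite invr_eq0. Qed.

Lemma sum_rot (G : F -> F -> int) :
  \sum_X \sum_Y G X Y = \sum_S \sum_D G ((S + D) / 2) ((S - D) / 2).
Proof.
rewrite !pair_big /=.
rewrite [LHS](reindex_inj (h := fun p : F * F => ((p.1 + p.2) / 2, (p.1 - p.2) / 2))) //=.
move=> [S D] [S' D'] /= [e1 e2].
have hS : forall S D : F, S = (S + D) / 2 + (S - D) / 2 by move=> *; field.
have hD : forall S D : F, D = (S + D) / 2 - (S - D) / 2 by move=> *; field.
have ES : S = S' by rewrite (hS S D) (hS S' D') e1 e2.
have ED : D = D' by rewrite (hD S D) (hD S' D') e1 e2.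
by rewrite ES ED.
Qed.

Lemma P3_val a : a != 0 ->
  \sum_X \sum_Y chi X * chi Y * ((X ^+ 2 + Y ^+ 2 == a)%:R)
  = - chi 2 - chi (-2) + chi (-2) * psi (a * a).
Proof.
move=> an0.
rewrite sum_rot.
have T1 : forall S D : F, chi ((S + D) / 2) * chi ((S - D) / 2) *
      ((((S + D) / 2) ^+ 2 + ((S - D) / 2) ^+ 2 == a)%:R)
    = chi (S ^+ 2 - D ^+ 2) * ((S ^+ 2 + D ^+ 2 == 2 * a)%:R).
  move=> S D; congr (_ * _).
    rewrite -chiM -(chi_sq_any (S ^+ 2 - D ^+ 2) two_inv_nz); congr chi; field; exact: two_nz.
  suff -> : (((S + D) / 2) ^+ 2 + ((S - D) / 2) ^+ 2 == a) = (S ^+ 2 + D ^+ 2 == 2 * a) by [].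
  apply/eqP/eqP => h.
    by rewrite -h; field; exact: two_nz.
  transitivity ((S ^+ 2 + D ^+ 2) / 2); first by field; exact: two_nz.
  by rewrite h; field; exact: two_nz.
under eq_bigr do under eq_bigr do rewrite T1.
rewrite (sum_sq2 (fun U V => chi (U - V) * ((U + V == 2 * a)%:R))).
have T2 : forall U : F, \sum_V (r U)%:Z * (r V)%:Z * (chi (U - V) * (U + V == 2 * a)%:R)
    = (r (2 * a - U))%:Z * ((r U)%:Z * chi (U - (2 * a - U))).
  move=> U; rewrite -(sum_pick (fun V => (r U)%:Z * chi (U - V))).
  by apply: eq_bigr => V _; rewrite eq_addsub; ring.
under eq_bigr do rewrite T2.
have T3 : forall U : F, (r (2 * a - U))%:Z * ((r U)%:Z * chi (U - (2 * a - U)))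
   = chi (2 * U + (- (2 * a))) + chi 2 * chi ((U - 0) * (U - a))
     + chi (-2) * chi ((U - 2 * a) * (U - a))
     + chi (U * (2 * a - U) * (U - (2 * a - U))).
  move=> U.
  have e3 : forall z, (r z)%:Z = 1 + chi z by move=> z; rewrite /chi; ring.
  rewrite !e3.
  have f1 : chi 2 * chi ((U - 0) * (U - a)) = chi U * chi (U - (2 * a - U)).
    by rewrite -!chiM; congr chi; ring.
  have f2 : chi (-2) * chi ((U - 2 * a) * (U - a)) = chi (2 * a - U) * chi (U - (2 * a - U)).
    by rewrite -!chiM; congr chi; ring.
  have f3 : chi (U * (2 * a - U) * (U - (2 * a - U))) =
            chi U * chi (2 * a - U) * chi (U - (2 * a - U)).
    by rewrite -!chiM.
  have f4 : 2 * U + - (2 * a) = U - (2 * a - U) by ring.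
  rewrite f1 f2 f3 f4; ring.
under eq_bigr do rewrite T3.
rewrite big_split /= big_split /= big_split /= sum_chi_aff // -!mulr_sumr !sum_chi_quad.
have -> : (0 == a) = false by rewrite eq_sym (negbTE an0).
have -> : (2 * a == a) = false.
  apply/negbTE; rewrite -subr_eq0 (_ : 2 * a - a = a) //; ring.
rewrite (reindex_inj (h := fun V => V + a)) /=; last exact: addIr.
have -> : \sum_V chi ((V + a) * (2 * a - (V + a)) * (V + a - (2 * a - (V + a))))
   = chi (-2) * psi (a * a).
  rewrite /psi mulr_sumr; apply: eq_bigr => V _; rewrite -chiM; congr chi; ring.
ring.
Qed.

Lemma M_val a : a != 0 ->
  \sum_u \sum_v ((u ^+ 4 + v ^+ 4 == a)%:R : int) =
  q%:Z - chi (-1) + 2 * (chi (-1) * psi a) - chi 2 - chi (-2) + chi (-2) * psi (a * a).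
Proof.
move=> an0.
have E : forall u v : F, ((u ^+ 4 + v ^+ 4 == a)%:R : int) = (((u ^+ 2) ^+ 2 + (v ^+ 2) ^+ 2 == a)%:R).
  by move=> u v; rewrite -!exprM.
under eq_bigr do under eq_bigr do rewrite E.
rewrite (sum_sq2 (fun X Y => ((X ^+ 2 + Y ^+ 2 == a)%:R))).
have e3 : forall z, (r z)%:Z = 1 + chi z by move=> z; rewrite /chi; ring.
have T : forall X Y : F, (r X)%:Z * (r Y)%:Z * ((X ^+ 2 + Y ^+ 2 == a)%:R)
   = (r X)%:Z * ((X ^+ 2 + Y ^+ 2 == a)%:R) + chi Y * ((Y ^+ 2 + X ^+ 2 == a)%:R)
     + chi X * chi Y * ((X ^+ 2 + Y ^+ 2 == a)%:R).
  move=> X Y; rewrite (addrC (Y ^+ 2)) (e3 Y) (e3 X); ring.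
under eq_bigr do under eq_bigr do rewrite T.
under eq_bigr do rewrite big_split /= big_split /=.
rewrite big_split /= big_split /= P3_val //.
have -> : \sum_(X : F) \sum_(Y : F) (r X)%:Z * ((X ^+ 2 + Y ^+ 2 == a)%:R)
   = q%:Z - chi (-1) + chi (-1) * psi a.
  have T' : forall X : F, (r X)%:Z * (r (a - X ^+ 2))%:Z = (r (a - X ^+ 2))%:Z + chi X * (r (a - X ^+ 2))%:Z.
    by move=> X; rewrite (e3 X); ring.
  under eq_bigr do rewrite -mulr_sumr inner_I T'.
  by rewrite big_split /= (A1_val an0) B1_val.
rewrite exchange_big /=.
have -> : \sum_(Y : F) \sum_(X : F) chi Y * ((Y ^+ 2 + X ^+ 2 == a)%:R)
   = chi (-1) * psi a.
  rewrite -B1_val; apply: eq_bigr => Y _; by rewrite -mulr_sumr inner_I.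
ring.
Qed.

Lemma count4 (a : F) : (\sum_u ((u ^+ 4 == a)%:R : int)) <= 4.
Proof.
have -> : \sum_u ((u ^+ 4 == a)%:R : int) = \sum_u (((u ^+ 2) ^+ 2 == a)%:R : int).
  by apply: eq_bigr => u _; rewrite -exprM.
rewrite (sum_sq (fun Y => ((Y ^+ 2 == a)%:R))).
apply: le_trans (_ : \sum_Y 2 * ((Y ^+ 2 == a)%:R : int) <= _).
  apply: ler_sum => Y _; apply: ler_wpM2r; first by case: (_ == _).
  by rewrite lez_nat r_le2.
rewrite -mulr_sumr -r_sum.
have := r_le2 a; rewrite -(lez_nat (r a) 2); lia.
Qed.

Lemma bnd (e s Q : int) : -1 <= e <= 1 -> s ^+ 2 <= 4 * Q -> 61 <= Q -> - (Q - 11) < 3 * (e * s).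
Proof.
move=> /andP [h1 h2] h3 h4.
have hq : 36 * Q < (Q - 11) ^+ 2 by nia.
have hs1 : 3 * s < Q - 11.
  rewrite ltNge; apply/negP => h; have h5 : (Q - 11) ^+ 2 <= (3 * s) ^+ 2.
    by rewrite ler_sqr ?nnegrE //; lia.
  nia.
have hs2 : - (Q - 11) < 3 * s.
  rewrite ltNge; apply/negP => h; have h5 : (Q - 11) ^+ 2 <= (3 * s) ^+ 2.
    rewrite -(sqrrN (3 * s)) ler_sqr ?nnegrE //; lia.
  nia.
have : e = -1 \/ e = 0 \/ e = 1 by lia.
case=> [->|[->|->]]; lia.
Qed.

Lemma main_gen (a : F) : a != 0 -> (61 <= q)%N ->
  exists u v : F, [/\ u != 0, v != 0 & u ^+ 4 + v ^+ 4 = a].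
Proof.
move=> an0 q61.
have Q61 : 61 <= q%:Z by rewrite lez_nat.
have aa0 : a * a != 0 by rewrite mulf_neq0.
have b1 := bnd (chi_abs (-1)) (psi_bound an0) Q61.
have b2 := bnd (chi_abs (-2)) (psi_bound aa0) Q61.
have c1 := chi_abs (-1); have c2 := chi_abs 2; have c3 := chi_abs (-2).
have HM := M_val an0.
case: (pickP [pred p : F * F | [&& p.1 != 0, p.2 != 0 & p.1 ^+ 4 + p.2 ^+ 4 == a]]).
  move=> [u v] /= /and3P [h1 h2 /eqP h3]; by exists u, v.
move=> H.
have HM8 : \sum_u \sum_v ((u ^+ 4 + v ^+ 4 == a)%:R : int) <= 8.
  apply: le_trans (_ : \sum_u (((u ^+ 4 == a)%:R : int) +
                  (u == 0)%:R * \sum_v ((v ^+ 4 == a)%:R : int)) <= _).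
    apply: ler_sum => u _; case: (u =P 0) => [->|/eqP un0].
      rewrite mul1r.
      have -> : \sum_v (((0 : F) ^+ 4 + v ^+ 4 == a)%:R : int) = \sum_v ((v ^+ 4 == a)%:R : int).
        by apply: eq_bigr => v _; rewrite expr0n add0r.
      by rewrite lerDr; case: (_ == _).
    rewrite mul0r addr0 (bigD1 0) //= big1 ?addr0 ?expr0n ?addr0 //.
    move=> v vn0; have := H (u, v); rewrite /= un0 vn0 /= => ->; by [].
  rewrite big_split /= -mulr_suml.
  have -> : \sum_(u : F) ((u == 0)%:R : int) = 1.
    by rewrite (bigD1 0) //= eqxx big1 ?addr0 // => u /negbTE ->.
  rewrite mul1r; have h4 := count4 a; apply: le_trans (lerD h4 h4) _; by [].
have := M_val an0; move: HM8 b1 b2 c1 c2 c3.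
set M := \sum_u _; set x := chi (-1) * psi a; set y := chi (-2) * psi (a * a).
move=> HM8 b1 b2 /andP [c1 c1'] /andP [c2 c2'] /andP [c3 c3'] EM.
lia.
Qed.

End Gen.

Fixpoint snp (p d k : nat) (a : 'F_p) : bool :=
  if k is k'.+1 then [exists b : 'F_p, (b != 0) && snp d k' (a - b ^+ d)] else a == 0.

Lemma snp_sum p d k (a : 'F_p) : sum_nz_powers d k a = snp d k a.
Proof.
elim: k a => [|k IH] a /=.
  rewrite /sum_nz_powers; apply/existsP/idP.
    by move=> [f /andP [_]]; rewrite big_ord0.
  move=> ha; exists [ffun i => 0]; rewrite big_ord0 ha andbT.
  by apply/forallP => -[].
apply/existsP/existsP.
  move=> [f /andP [/forallP fn0 /eqP ha]]; exists (f ord0); rewrite fn0 /=.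
  rewrite -IH; apply/existsP; exists [ffun i : 'I_k => f (lift ord0 i)].
  apply/andP; split; first by apply/forallP => i; rewrite ffunE.
  rewrite ha big_ord_recl (addrC (f ord0 ^+ d)) addrK; apply/eqP; apply: eq_bigr => i _.
  by rewrite ffunE.
move=> [b /andP [bn0]]; rewrite -IH => /existsP [g /andP [/forallP gn0 /eqP hg]].
pose f : {ffun 'I_k.+1 -> 'F_p} := [ffun i => if unlift ord0 i is Some j then g j else b].
exists f.
apply/andP; split.
  apply/forallP => i; rewrite ffunE; case: unliftP => [j _|_] //; exact: gn0.
rewrite big_ord_recl ffunE unlift_none.
have -> : \sum_(i < k) (f (lift ord0 i)) ^+ d = \sum_(i < k) g i ^+ d.
  by apply: eq_bigr => i _; rewrite ffunE liftK.
by rewrite -hg addrC subrK.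
Qed.

Local Close Scope ring_scope.
Definition pw4 (p b : nat) := let s := (b * b) %% p in (s * s) %% p.
Definition subm (p a c : nat) := if (c <= a)%N then (a - c)%N else (a + p - c)%N.
Fixpoint snpN (p : nat) (fp : seq nat) (k : nat) (a : nat) : bool :=
  if k is k'.+1 then has (fun c => snpN p fp k' (subm p a c)) fp else a == 0%N.
Definition fps p := [seq pw4 p b | b <- iota 1 p.-1].
Definition chkN (p n : nat) :=
  let fp := fps p in
  all (fun a => has (fun k => snpN p fp k a && all (fun j => ~~ snpN p fp j a) (iota 0 k)) (iota 0 n.+1)) (iota 1 p.-1)
  && has (fun a => snpN p fp n a && all (fun j => ~~ snpN p fp j a) (iota 0 n)) (iota 1 p.-1).
Local Open Scope ring_scope.

Section Bridge.
Variable p : nat.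
Hypothesis pp : prime p.

Lemma Fp_lt (x : 'F_p) : (val x < p)%N.
Proof. by have := ltn_ord x; rewrite [X in (_ < X)%N -> _]Fp_cast. Qed.

Lemma Fp_valK (x : 'F_p) : (val x)%:R = x.
Proof. by apply: val_inj; have := val_Fp_nat pp (val x); rewrite /= modn_small // Fp_lt. Qed.

Lemma val_natFp n : (n < p)%N -> val (n%:R : 'F_p) = n.
Proof. by move=> h; have := val_Fp_nat pp n; rewrite modn_small. Qed.

Lemma pw4E b : pw4 p b = (b ^ 4 %% p)%N.
Proof.
by rewrite /pw4 modnMml modnMmr !expnS expn0 muln1 !mulnA.
Qed.

Lemma val_sub4 (a b : 'F_p) : val (a - b ^+ 4) = subm p (val a) (pw4 p (val b)).
Proof.
have hc : (pw4 p (val b) < p)%N by rewrite pw4E ltn_mod prime_gt0.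
have ha := Fp_lt a.
have E : a - b ^+ 4 = (val a)%:R - (pw4 p (val b))%:R.
  by rewrite pw4E Fp_nat_mod // natrX Fp_valK Fp_valK.
rewrite E /subm; case: ifP => h.
  by rewrite -natrB // val_natFp //; apply: leq_ltn_trans (leq_subr _ _) ha.
rewrite -[X in X - _]addr0 -(pchar_Fp_0 pp) -natrD -natrB; last first.
  by apply: ltnW; apply: leq_trans hc (leq_addl _ _).
rewrite val_natFp //; move/negbT: h; rewrite -ltnNge => h; lia.
Qed.

Lemma snp_nat k (a : 'F_p) : snp 4 k a = snpN p (fps p) k (val a).
Proof.
elim: k a => [|k IH] a /=.
  by rewrite -val_eqE.
apply/existsP/hasP.
  move=> [b /andP [bn0]]; rewrite IH val_sub4 => h.
  exists (pw4 p (val b)) => //; apply: map_f.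
  rewrite mem_iota add1n (prednK (prime_gt0 pp)) Fp_lt andbT lt0n.
  by apply: contraNneq bn0 => hb; rewrite -(Fp_valK b) hb.
move=> [c /mapP [b' hb' ->] h].
move: hb'; rewrite mem_iota add1n (prednK (prime_gt0 pp)) => /andP [b1 b2].
exists (b'%:R); apply/andP; split.
  by apply/eqP => /(congr1 val); rewrite val_natFp //= => /eqP; rewrite -(val_natFp (prime_gt0 pp)) => /eqP e; move: b1; rewrite e.
by rewrite IH val_sub4 val_natFp.
Qed.
End Bridge.

Lemma Fp_mem_iota p (a : 'F_p) : prime p -> a != 0 -> (val a \in iota 1 p.-1).
Proof.
move=> pp an0; rewrite mem_iota add1n (prednK (prime_gt0 pp)) Fp_lt // andbT lt0n.
by apply: contraNneq an0 => hb; rewrite -(Fp_valK pp a) hb.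
Qed.

Lemma snpE p k (a : 'F_p) : prime p -> sum_nz_powers 4 k a = snpN p (fps p) k (val a).
Proof. by move=> pp; rewrite snp_sum snp_nat. Qed.

Lemma g_of_chk p n : prime p -> chkN p n -> g_is 4 p n.
Proof.
move=> pp /andP [/allP H1 /hasP [a0 ha0 /andP [s0 /allP s0']]].
split.
  move=> a an0; have /hasP [k hk /andP [sk /allP sj]] := H1 _ (Fp_mem_iota pp an0).
  exists k.
    split; first by rewrite snpE.
    by move=> j hj; rewrite snpE //; apply: sj; rewrite mem_iota.
  by move: hk; rewrite mem_iota.
move: ha0; rewrite mem_iota add1n (prednK (prime_gt0 pp)) => /andP [h1 h2].
have va : val (a0%:R : 'F_p) = a0 by rewrite val_natFp.
exists (a0%:R).
  by apply/eqP => /(congr1 val); rewrite va /=; move=> e; move: h1; rewrite e.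
split; first by rewrite snpE // va.
by move=> j hj; rewrite snpE // va; apply: s0'; rewrite mem_iota.
Qed.

Lemma large_case p : prime p -> (61 <= p)%N -> g_is 4 p 2.
Proof.
move=> pp p61.
have two_nz : (2 : 'F_p) != 0.
  apply/eqP => /(congr1 val); rewrite val_natFp //=; lia.
have q61 : (61 <= #|'F_p|)%N by rewrite card_Fp.
have two_sum : forall a : 'F_p, a != 0 -> sum_nz_powers 4 2 a.
  move=> a an0; have [u [v [un0 vn0 e]]] := main_gen two_nz an0 q61.
  rewrite snp_sum /=; apply/existsP; exists u; rewrite un0 /=.
  apply/existsP; exists v; rewrite vn0 /= -e; apply/eqP; ring.
have not0 : forall a : 'F_p, a != 0 -> ~~ sum_nz_powers 4 0 a.
  by move=> a an0; rewrite snp_sum /=.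
split.
  move=> a an0; case h1 : (sum_nz_powers 4 1 a).
    exists 1%N => //; split => // j; rewrite ltnS leqn0 => /eqP ->; exact: not0.
  exists 2%N => //; split; first exact: two_sum.
  move=> j; rewrite ltnS leq_eqVlt ltnS leqn0 => /orP [/eqP ->|/eqP ->].
    by rewrite h1.
  exact: not0.
have [a ha] : exists a : 'F_p, ~~ [exists x, x ^+ 4 == a].
  case: (boolP [forall a : 'F_p, [exists x, x ^+ 4 == a]]) => [/forallP H'|/forallPn [a ha]]; last by exists a.
  exfalso.
  have : #|image (fun x : 'F_p => x ^+ 4) 'F_p| == #|'F_p|.
    apply/eqP; apply: eq_card => a; rewrite inE /=.
    have /existsP [x /eqP <-] := H' a; exact: image_f.
  move/image_injP => inj.
  have : (1 : 'F_p) = -1 by apply: inj => //; rewrite expr1n -signr_odd.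
  move/eqP; rewrite -subr_eq0 opprK => /eqP h.
  by move: two_nz; rewrite -h /= eqxx.
have an0 : a != 0.
  by apply: contraNneq ha => ->; apply/existsP; exists 0; rewrite expr0n.
exists a => //; split; first exact: two_sum.
move=> j; rewrite ltnS leq_eqVlt ltnS leqn0 => /orP [/eqP ->|/eqP ->]; last exact: not0.
rewrite snp_sum /=; apply/negP => /existsP [b /andP [_ h]].
move: ha => /negP; apply; apply/existsP; exists b.
by rewrite eq_sym -subr_eq0.
Qed.

Lemma chk5 : chkN 5 4. Proof. vm_compute. reflexivity. Qed.
Lemma chk13 : chkN 13 3. Proof. vm_compute. reflexivity. Qed.
Lemma chk17 : chkN 17 3. Proof. vm_compute. reflexivity. Qed.
Lemma chk29 : chkN 29 3. Proof. vm_compute. reflexivity. Qed.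
Lemma chk37 : chkN 37 2. Proof. vm_compute. reflexivity. Qed.
Lemma chk41 : chkN 41 2. Proof. vm_compute. reflexivity. Qed.
Lemma chk53 : chkN 53 2. Proof. vm_compute. reflexivity. Qed.

Lemma small_primes : all (fun p => (prime p && (p %% 4 == 1)%N) ==> (p \in [:: 5; 13; 17; 29; 37; 41; 53]%N)) (iota 0 61).
Proof. vm_compute. reflexivity. Qed.

Theorem theorem5 (p f : nat) (x y : int) :
  prime p -> p = (4 * f + 1)%N ->
  (p%:Z = x ^+ 2 + 4 * y ^+ 2)%R -> (x = 1 %[mod 4])%Z ->
  [/\ p = 5%N -> g_is 4 p 4,
      p \in [:: 13; 17; 29]%N -> g_is 4 p 3
    & p \notin [:: 5; 13; 17; 29]%N -> g_is 4 p 2].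
Proof.
move=> pp hp _ _.
case: (ltnP p 61) => hl.
  have : p \in [:: 5; 13; 17; 29; 37; 41; 53]%N.
    have := allP small_primes p; rewrite mem_iota /= hl pp /= => /(_ isT).
    have h4 : (p %% 4 == 1)%N by apply/eqP; rewrite hp; lia.
    by move/implyP; apply.
  rewrite !inE => /or4P [/eqP->|/eqP->|/eqP->|/or4P [/eqP->|/eqP->|/eqP->|/eqP->]].
  - by split => // _; apply: g_of_chk.
  - by split => // _; apply: g_of_chk.
  - by split => // _; apply: g_of_chk.
  - by split => // _; apply: g_of_chk.
  - by split => // _; apply: g_of_chk.
  - by split => // _; apply: g_of_chk.
  - by split => // _; apply: g_of_chk.
split.
- by move=> h; move: hl; rewrite h.
- by rewrite !inE => /or3P [] /eqP h; move: hl; rewrite h.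
- by move=> _; apply: large_case.
Qed.
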